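(* Let $(X,\|\cdot\|)$ be a normed space and $X_1\subset X_2\subset\cdots$ an increasing sequence of linear subspaces with $\bigcup_n X_n$ dense in $X$. Suppose each $X_n$ carries a norm $\|\cdot\|_n$ and $\rho_n\in R(S_{(X_n,\|\cdot\|_n)})$. Assume $\lim_{n\to\infty}\sup_{x\in X_n\cap S_X}|1-\|x\|_n|=0$. Then every accumulation point $\rho$ of $(\rho_n)$ belongs to $R(S_X)$.
   Context: For a normed space $(Z,\|\cdot\|_Z)$ with unit sphere $S_Z$, $R(S_Z):=\bigcap_{m\in\mathbb{N}}\bigcap_{w_1,\dots,w_m\in S_Z}\overline{\mathrm{conv}}\{\frac1m\sum_{j=1}^m\|x-w_j\|_Z:x\in S_Z\}$ (closed convex hulls in $\mathbb{R}$); $S_X$ is the unit sphere of $(X,\|\cdot\|)$ and $S_{(X_n,\|\cdot\|_n)}$ the unit sphere of $X_n$ for $\|\cdot\|_n$. *)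

(* Defs.v *)
From HB Require Import structures.
From mathcomp Require Import all_boot all_order all_algebra.
From mathcomp Require Import all_classical all_reals all_analysis.
Set Implicit Arguments. Unset Strict Implicit. Unset Printing Implicit Defensive.
Import Order.TTheory GRing.Theory Num.Theory.
Import numFieldNormedType.Exports.
Local Open Scope classical_set_scope.
Local Open Scope ring_scope.

Definition convex_set_R (R : realType) (C : set R) : Prop :=
  forall a b t : R, C a -> C b -> 0 <= t -> t <= 1 -> C (t * a + (1 - t) * b).

Definition closed_conv_hull (R : realType) (A : set R) : set R :=
  \bigcap_(C in [set C : set R | convex_set_R C /\ closed C /\ A `<=` C]) C.

(* R(S) for a sphere S of a normed space with distance d(x,w) = ||x - w||:
   intersection over m >= 1 (written m.+1) and w_1..w_m in S of the closed
   convex hull of { (1/m) sum_j d(x, w_j) : x in S }. *)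
Definition rendezvous_set (R : realType) (T : Type) (S : set T)
    (d : T -> T -> R) : set R :=
  \bigcap_(m in [set: nat])
    \bigcap_(w in [set w : 'I_m.+1 -> T | forall j, S (w j)])
      closed_conv_hull
        [set (m.+1%:R)^-1 * \sum_(j < m.+1) d x (w j) | x in S].

Definition lin_subspace (R : realType) (X : normedModType R) (V : set X) : Prop :=
  V 0 /\ (forall x y, V x -> V y -> V (x + y)) /\
  (forall (a : R) x, V x -> V (a *: x)).

Definition norm_on (R : realType) (X : normedModType R) (V : set X)
    (N : X -> R) : Prop :=
  (forall x, V x -> 0 <= N x) /\
  (forall x, V x -> N x = 0 -> x = 0) /\
  (forall (a : R) x, V x -> N (a *: x) = `|a| * N x) /\
  (forall x y, V x -> V y -> N (x + y) <= N x + N y).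

Definition sphere_on (R : realType) (X : normedModType R) (V : set X)
    (N : X -> R) : set X := [set x | V x /\ N x = 1].

Definition R_sub (R : realType) (X : normedModType R) (V : set X)
    (N : X -> R) : set R :=
  rendezvous_set (sphere_on V N) (fun x w => N (x - w)).

Definition R_X (R : realType) (X : normedModType R) : set R :=
  rendezvous_set [set x : X | `|x| = 1] (fun x w => `|x - w|).

(* Main.v *)
From HB Require Import structures.
From mathcomp Require Import all_boot all_order all_algebra.
From mathcomp Require Import all_classical all_reals all_analysis.
From mathcomp Require Import ring lra.
Require Import Defs.
Import Order.TTheory GRing.Theory Num.Theory.
Import numFieldNormedType.Exports.
Local Open Scope classical_set_scope.
Local Open Scope ring_scope.
Set Implicit Arguments. Unset Strict Implicit.

Lemma closure_pt (R : realType) (C : set R) x : closed C ->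
  (forall e : R, 0 < e -> exists c, C c /\ `|x - c| < e) -> C x.
Proof.
move=> Ccl H; apply: Ccl => B /nbhs_ballP [e e0 sB].
have [c [Cc hc]] := H e e0; exists c; split => //; apply: sB.
by rewrite -ball_normE /ball_ /=.
Qed.

Lemma dense_pt (R : realType) (X : normedModType R) (Xn : nat -> set X) :
  closure (\bigcup_n Xn n) = setT -> forall w (e : R), 0 < e ->
  exists p : nat * X, Xn p.1 p.2 /\ `|w - p.2| < e.
Proof.
move=> H w e e0.
have : closure (\bigcup_n Xn n) w by rewrite H.
move=> /(_ (ball w e) (nbhsx_ballx w e e0)) [u [[k _ Xku] bu]].
exists (k, u); split => //; by rewrite -ball_normE /ball_ /= in bu.
Qed.

Lemma mono_sub (T : Type) (Xn : nat -> set T) : (forall n, Xn n `<=` Xn n.+1) ->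
  forall k n, (k <= n)%N -> Xn k `<=` Xn n.
Proof.
move=> H k; elim => [|n IH]; first by rewrite leqn0 => /eqP ->.
rewrite leq_eqVlt => /orP [/eqP -> //|]; rewrite ltnS => /IH h x /h; exact: H.
Qed.

Lemma N0 (R : realType) (X : normedModType R) (V : set X) N :
  lin_subspace V -> norm_on V N -> N 0 = 0.
Proof.
move=> [V0 _] [_ [_ [hom _]]]; have := hom 0 0 V0.
by rewrite scale0r normr0 mul0r.
Qed.

Lemma Hdev (R : realType) (X : normedModType R) (V : set X) N (e : R) :
  lin_subspace V -> norm_on V N ->
  (forall x, V x -> `|x| = 1 -> `|1 - N x| <= e) ->
  forall z, V z -> `|N z - `|z| | <= e * `|z|.
Proof.
move=> hV hN hdev z Vz.
have [->|z0] := eqVneq z 0.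
  by rewrite (N0 hV hN) normr0 subrr normr0 mulr0.
case: hV => V0 [_ Vsc]; case: hN => _ [_ [hom _]].
set s := `|z|; have s0 : 0 < s by rewrite normr_gt0.
set x := s^-1 *: z; have Vx : V x by apply: Vsc.
have nx : `|x| = 1.
  by rewrite /x normrZ ger0_norm ?invr_ge0 ?ltW // mulVf // lt0r_neq0.
have zx : z = s *: x by rewrite /x scalerA mulfV ?lt0r_neq0 // scale1r.
have hNz : N z = s * N x by rewrite {1}zx hom // ger0_norm // ltW.
have h := hdev x Vx nx; rewrite distrC in h.
rewrite hNz -{2}(mulr1 s) -mulrBr normrM (ger0_norm (ltW s0)).
by rewrite mulrC ler_pM2r.
Qed.

Lemma sph_bound (R : realType) (X : normedModType R) (V : set X) N (e : R) :
  lin_subspace V -> norm_on V N -> 0 <= e -> e <= 1/2 ->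
  (forall x, V x -> `|x| = 1 -> `|1 - N x| <= e) ->
  forall z, V z -> N z = 1 -> `|z| <= 2 /\ `| `|z| - 1 | <= 2 * e.
Proof.
move=> hV hN e0 he hdev z Vz Nz.
have := Hdev hV hN hdev Vz; rewrite Nz => h.
have n0 := normr_ge0 z.
have h' := h; rewrite ler_norml in h'; case/andP: h' => h1 h2.
have z2 : `|z| <= 2 by nra.
split => //; rewrite distrC; apply: le_trans h _; nra.
Qed.

Lemma avg_bound (R : realType) m (a b : 'I_m.+1 -> R) (D : R) :
  (forall j, `|a j - b j| <= D) ->
  `|(m.+1%:R)^-1 * \sum_j a j - (m.+1%:R)^-1 * \sum_j b j| <= D.
Proof.
move=> H; rewrite -mulrBr -sumrB normrM ger0_norm ?invr_ge0 //.
apply: (@le_trans _ _ ((m.+1%:R)^-1 * \sum_(j < m.+1) D)).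
  apply: ler_wpM2l; first by rewrite invr_ge0.
  apply: le_trans (ler_norm_sum _ _ _) _; exact: ler_sum.
by rewrite sumr_const card_ord -[D *+ _]mulr_natr mulrCA mulVf ?mulr1 // pnatr_eq0.
Qed.

Lemma lin3 (R : realType) (a b r e : R) : a - b <= e/2 -> b < r - e -> a <= r - e/2.
Proof. move=> *; lra. Qed.
Lemma lin4 (R : realType) (a b r e : R) : - (e/2) <= a - b -> r + e < b -> r + e/2 <= a.
Proof. move=> *; lra. Qed.

Unset Implicit Arguments.
Lemma approx (R : realType) (X : normedModType R)
    (Xn : nat -> set X) (Nn : nat -> X -> R) m (w : 'I_m.+1 -> X) :
  (forall n, lin_subspace (Xn n)) -> (forall n, Xn n `<=` Xn n.+1) ->
  closure (\bigcup_n Xn n) = setT -> (forall n, norm_on (Xn n) (Nn n)) ->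
  (forall e : R, 0 < e -> exists N : nat, forall n, (N <= n)%N ->
     forall x, Xn n x -> `|x| = 1 -> `|1 - Nn n x| <= e) ->
  (forall j, `|w j| = 1) ->
  forall d : R, 0 < d -> exists N : nat, forall n, (N <= n)%N ->
   exists v : 'I_m.+1 -> X, (forall j, sphere_on (Xn n) (Nn n) (v j)) /\
   forall y, sphere_on (Xn n) (Nn n) y -> exists x : X, `|x| = 1 /\
    `|(m.+1%:R)^-1 * \sum_(j < m.+1) Nn n (y - v j)
      - (m.+1%:R)^-1 * \sum_(j < m.+1) `|x - w j| | <= d.
Proof.
move=> hV hmono hdense hN hdevN hw d d0.
pose e := Num.min (1/2 : R) (d/20).
have e0 : 0 < e by rewrite lt_min; apply/andP; split; lra.
have /andP [e1 e2] : (e <= 1/2) && (e <= d/20) by rewrite -le_min.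
pose dd := Num.min (1/2 : R) (d/6).
have dd0 : 0 < dd by rewrite lt_min; apply/andP; split; lra.
have /andP [dd1 dd2] : (dd <= 1/2) && (dd <= d/6) by rewrite -le_min.
have [N1 hN1] := hdevN e e0.
have hp : forall j, exists p : nat * X, Xn p.1 p.2 /\ `|w j - p.2| < dd :=
  fun j => dense_pt hdense (w j) dd0.
case: (boolp.choice hp) => f hf.
exists (maxn N1 (\max_(j < m.+1) (f j).1)) => n hn.
have nN1 : (N1 <= n)%N by apply: leq_trans hn; exact: leq_maxl.
have nN2 : forall j, ((f j).1 <= n)%N.
  move=> j; have /= Hj := @leq_bigmax _ (fun j : 'I_m.+1 => (f j).1) j.
  apply: leq_trans Hj _; apply: leq_trans hn; exact: leq_maxr.
have hd := hN1 n nN1.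
have hD := Hdev (hV n) (hN n) hd.
have hS := sph_bound (hV n) (hN n) (ltW e0) e1 hd.
have [V0 [VD VZ]] := hV n.
have [Npos [Ndef [Nhom Ntri]]] := hN n.
pose u j := (f j).2.
have Vu : forall j, Xn n (u j) := fun j => mono_sub hmono (nN2 j) (proj1 (hf j)).
have hu : forall j, `|w j - u j| < dd := fun j => proj2 (hf j).
pose v j := (Nn n (u j))^-1 *: u j.
have hv : forall j, [/\ Xn n (v j), Nn n (v j) = 1 & `|v j - w j| <= 3 * e + 3 * dd].
  move=> j.
  have hwu := hu j.
  have := ler_dist_dist (w j) (u j); rewrite hw => hdist.
  have hdist' := le_lt_trans hdist hwu.
  rewrite ltr_norml in hdist'; case/andP: hdist' => hu1 hu2.
  have hDu := hD _ (Vu j).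
  have hDu' := hDu; rewrite ler_norml in hDu'; case/andP: hDu' => hm1 hm2.
  have un0 := normr_ge0 (u j).
  have M0 : `|u j| / 2 <= Nn n (u j) by nra.
  have Mpos : 0 < Nn n (u j) by lra.
  have Vv : Xn n (v j) by apply: VZ.
  have Nv : Nn n (v j) = 1.
    rewrite /v Nhom // ger0_norm; last by rewrite invr_ge0 ltW.
    by rewrite mulVf // lt0r_neq0.
  have key : Nn n (u j) * `|v j - u j| = `|1 - Nn n (u j)| * `|u j|.
    have -> : v j - u j = (Nn n (u j))^-1 *: ((1 - Nn n (u j)) *: u j).
      by rewrite scalerA mulrBr mulr1 mulVf ?lt0r_neq0 // scalerBl scale1r.
    rewrite normrZ normrZ mulrA ger0_norm; last by rewrite invr_ge0 ltW.
    by rewrite -!mulrA mulVKf ?lt0r_neq0.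
  have bvu : `|v j - u j| <= 3 * e + 2 * dd.
    have tn0 := normr_ge0 (v j - u j).
    have hDu2 : `|1 - Nn n (u j)| <= e * `|u j| + dd.
      apply: le_trans (ler_distD `|u j| _ _) _.
      rewrite (distrC `|u j|); lra.
    have h1 : `|u j| / 2 * `|v j - u j| <= (e * `|u j| + dd) * `|u j|.
      apply: le_trans (_ : Nn n (u j) * `|v j - u j| <= _).
        by apply: ler_wpM2r.
      by rewrite key; apply: ler_wpM2r.
    have h2 : `|v j - u j| <= 2 * (e * `|u j| + dd).
      have Upos : 0 < `|u j| by lra.
      rewrite -(ler_pM2l Upos); nra.
    nra.
  split => //.
  apply: le_trans (ler_distD (u j) _ _) _.
  rewrite (distrC (u j)); lra.
exists v; split.
  by move=> j; case: (hv j) => ? ? _; split.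
move=> y [Vy Ny].
have y0 : y != 0.
  apply/eqP => y0; rewrite y0 (N0 (hV n) (hN n)) in Ny.
  by move: Ny => /esym/eqP; rewrite oner_eq0.
have [y2 yY] := hS y Vy Ny.
have Y0 : 0 < `|y| by rewrite normr_gt0.
exists (`|y|^-1 *: y); split.
  by rewrite normrZ ger0_norm ?mulVf ?lt0r_neq0 // invr_ge0 ltW.
have hyx : `|y - `|y|^-1 *: y| <= 2 * e.
  have -> : y - `|y|^-1 *: y = (1 - `|y|^-1) *: y by rewrite scalerBl scale1r.
  rewrite normrZ.
  have -> : `|1 - `|y|^-1| * `|y| = `|(1 - `|y|^-1) * `|y| |.
    by rewrite normrM (ger0_norm (ltW Y0)).
  by rewrite mulrBl mul1r mulVf ?lt0r_neq0.
apply: avg_bound => j.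
case: (hv j) => Vvj Nvj hvw.
have [v2 _] := hS _ Vvj Nvj.
have Vyv : Xn n (y - v j) by rewrite -scaleN1r; apply: VD => //; apply: VZ.
have h1 := hD _ Vyv.
have h2 : `|y - v j| <= 4 by apply: le_trans (ler_normB _ _) _; lra.
have h2' : e * `|y - v j| <= 4 * e by nra.
have h3 : `| `|y - v j| - `| `|y|^-1 *: y - w j| | <= 2 * e + (3 * e + 3 * dd).
  apply: le_trans (ler_dist_dist _ _) _.
  have -> : (y - v j) - (`|y|^-1 *: y - w j) = (y - `|y|^-1 *: y) - (v j - w j).
    by rewrite !opprB addrACA [RHS]addrACA [- v j + _]addrC.
  by apply: le_trans (ler_normB _ _) _; apply: lerD.
apply: le_trans (ler_distD `|y - v j| _ _) _.
lra.
Qed.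


Theorem theorem4p5 (R : realType) (X : normedModType R)
    (Xn : nat -> set X) (Nn : nat -> X -> R) (rho : nat -> R) (r : R) :
  (forall n, lin_subspace (Xn n)) ->
  (forall n, Xn n `<=` Xn n.+1) ->
  closure (\bigcup_n Xn n) = setT ->
  (forall n, norm_on (Xn n) (Nn n)) ->
  (forall n, R_sub (Xn n) (Nn n) (rho n)) ->
  (forall e : R, 0 < e -> exists N : nat, forall n, (N <= n)%N ->
     forall x, Xn n x -> `|x| = 1 -> `|1 - Nn n x| <= e) ->
  (forall e : R, 0 < e -> forall N : nat, exists2 n, (N <= n)%N & `|rho n - r| < e) ->
  R_X X r.
Proof.
move=> hV hmono hdense hN hrho hdev hacc.
move=> m _ w hw.
move=> C [Cconv [Ccl AC]].
pose f (x : X) : R := (m.+1%:R)^-1 * \sum_(j < m.+1) `|x - w j|.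
have Af : forall x, `|x| = 1 -> C (f x) by move=> x hx; apply: AC; exists x.
have hU : forall eps : R, 0 < eps -> exists x, `|x| = 1 /\ r - eps <= f x.
  move=> eps eps0.
  case: (pselect (exists x, `|x| = 1 /\ r - eps <= f x)) => // H0.
  have Hlt : forall x, `|x| = 1 -> f x < r - eps.
    move=> x hx; rewrite ltNge; apply/negP => hle; apply: H0; by exists x.
  have e2 : 0 < eps / 2 by lra.
  have [N hN'] := approx _ _ _ _ _ w hV hmono hdense hN hdev hw (eps/2) e2.
  have [n hn hrn] := hacc (eps/2) e2 N.
  have [v [hv hy]] := hN' n hn.
  have Hc : [set t : R | t <= r - eps/2] (rho n).
    apply: (hrho n m I v hv); split; [|split].
    - move=> a b t /= ha hb t0 t1; nra.
    - exact: closed_le.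
    - move=> t [y hy' <-]; have [z [hz hxy]] := hy y hy'.
      have := Hlt z hz; rewrite /f => hfx.
      move: hxy; rewrite ler_norml => /andP[_ h2] /=; exact: lin3 h2 hfx.
  move: hrn; rewrite ltr_norml => /andP[h1 h2]; rewrite /= in Hc; move: h1 h2 Hc; clear; move=> *; lra.
have hL : forall eps : R, 0 < eps -> exists x, `|x| = 1 /\ f x <= r + eps.
  move=> eps eps0.
  case: (pselect (exists x, `|x| = 1 /\ f x <= r + eps)) => // H0.
  have Hlt : forall x, `|x| = 1 -> r + eps < f x.
    move=> x hx; rewrite ltNge; apply/negP => hle; apply: H0; by exists x.
  have e2 : 0 < eps / 2 by lra.
  have [N hN'] := approx _ _ _ _ _ w hV hmono hdense hN hdev hw (eps/2) e2.
  have [n hn hrn] := hacc (eps/2) e2 N.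
  have [v [hv hy]] := hN' n hn.
  have Hc : [set t : R | r + eps/2 <= t] (rho n).
    apply: (hrho n m I v hv); split; [|split].
    - move=> a b t /= ha hb t0 t1; nra.
    - exact: closed_ge.
    - move=> t [y hy' <-]; have [z [hz hxy]] := hy y hy'.
      have := Hlt z hz; rewrite /f => hfx.
      move: hxy; rewrite ler_norml => /andP[h1 _] /=; exact: lin4 h1 hfx.
  move: hrn; rewrite ltr_norml => /andP[h1 h2]; rewrite /= in Hc; move: h1 h2 Hc; clear; move=> *; lra.
apply: closure_pt Ccl _ => eps eps0.
have e2 : 0 < eps / 2 by lra.
have [x1 [hx1 h1]] := hU _ e2; have [x2 [hx2 h2]] := hL _ e2.
have C1 := Af x1 hx1; have C2 := Af x2 hx2.
move: h1 h2 C1 C2; set a1 := f x1; set a2 := f x2 => h1 h2 C1 C2.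
case: (lerP r a1) => ra1; last first.
  by exists a1; split => //; rewrite ltr_norml; apply/andP; split; lra.
case: (lerP a2 r) => a2r; last first.
  by exists a2; split => //; rewrite ltr_norml; apply/andP; split; lra.
exists r; split; last by rewrite subrr normr0.
case: (eqVneq a1 a2) => [e12|ne].
  by have -> : r = a1 by lra.
have lt12 : a2 < a1 by rewrite lt_neqAle eq_sym ne; exact: le_trans a2r ra1.
have d0 : 0 < a1 - a2 by lra.
pose t := (r - a2) / (a1 - a2).
have -> : r = t * a1 + (1 - t) * a2.
  by rewrite /t; field; rewrite subr_eq0.
apply: Cconv => //.
  by rewrite /t divr_ge0 //; lra.
by rewrite /t ler_pdivrMr // mul1r; lra.
Qed.
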